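(* For every integer $t\geq 2$ we have $f_o(t)\leq f_{eo}(t)\leq 2f(t)$.
   Context: All graphs are loopless. $f(t)$ is the smallest integer such that every graph with no $K_t$-minor is properly $f(t)$-colorable. An odd-$K_t$-minor of a graph $G$ is a 2-coloring of the vertices of $G$ together with vertex-disjoint trees $T_1,\dots,T_t$ in $G$ such that (i) every edge of every $T_i$ is properly colored (endpoints of different colors) and (ii) between any two distinct trees $T_i,T_j$ there is a monochromatic edge. An even-odd-$K_t$-minor is defined the same way except that (ii) is replaced by: between any two distinct trees $T_i,T_j$ there is at least one monochromatic edge and at least one properly colored edge. $f_o(t)$ (resp. $f_{eo}(t)$) is the smallest integer such that every graph with no odd-$K_t$-minor (resp. no even-odd-$K_t$-minor) is properly $f_o(t)$-colorable (resp. $f_{eo}(t)$-colorable). *)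

(* Defs.v *)
From mathcomp Require Import all_boot.
Set Implicit Arguments. Unset Strict Implicit. Unset Printing Implicit Defensive.

Section Graphs.
Variable T : finType.
Variable e : rel T.

Definition is_tree (B : {set T}) (F : {set {set T}}) : Prop :=
  [/\ B != set0,
      (forall f, f \in F -> exists x y, [/\ f = [set x; y], x \in B, y \in B & e x y]),
      (forall x y, x \in B -> y \in B -> connect [rel u v | [set u; v] \in F] x y)
    & #|F| = (#|B| - 1)%N].

Definition colorable (k : nat) : Prop :=
  exists c : T -> 'I_k, forall x y, e x y -> c x != c y.

Definition has_K_minor (t : nat) : Prop :=
  exists (B : 'I_t -> {set T}) (F : 'I_t -> {set {set T}}),
    [/\ (forall i, is_tree (B i) (F i)),
        (forall i j, i != j -> [disjoint B i & B j])
      & (forall i j, i != j -> exists x y, [/\ x \in B i, y \in B j & e x y])].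

Definition has_odd_K_minor (t : nat) : Prop :=
  exists (c : T -> bool) (B : 'I_t -> {set T}) (F : 'I_t -> {set {set T}}),
    [/\ (forall i, is_tree (B i) (F i)),
        (forall i x y, [set x; y] \in F i -> c x != c y),
        (forall i j, i != j -> [disjoint B i & B j])
      & (forall i j, i != j ->
           exists x y, [/\ x \in B i, y \in B j, e x y & c x == c y])].

Definition has_even_odd_K_minor (t : nat) : Prop :=
  exists (c : T -> bool) (B : 'I_t -> {set T}) (F : 'I_t -> {set {set T}}),
    [/\ (forall i, is_tree (B i) (F i)),
        (forall i x y, [set x; y] \in F i -> c x != c y),
        (forall i j, i != j -> [disjoint B i & B j]),
        (forall i j, i != j ->
           exists x y, [/\ x \in B i, y \in B j, e x y & c x == c y])
      & (forall i j, i != j ->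
           exists x y, [/\ x \in B i, y \in B j, e x y & c x != c y])].
End Graphs.

Definition simple_graph (T : finType) (e : rel T) : Prop :=
  irreflexive e /\ symmetric e.

(* "k is an admissible value": every graph with no K_t-minor is k-colourable.
   f(t) is the least such k; similarly f_o, f_eo. *)
Definition minor_bound (t k : nat) : Prop :=
  forall (T : finType) (e : rel T), simple_graph e -> ~ has_K_minor e t -> colorable e k.
Definition odd_minor_bound (t k : nat) : Prop :=
  forall (T : finType) (e : rel T), simple_graph e -> ~ has_odd_K_minor e t -> colorable e k.
Definition even_odd_minor_bound (t k : nat) : Prop :=
  forall (T : finType) (e : rel T), simple_graph e -> ~ has_even_odd_K_minor e t -> colorable e k.

(* Main.v *)
Require Import Defs.
From mathcomp Require Import all_boot.
From mathcomp Require Import zify.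
From Stdlib Require Import Classical ClassicalEpsilon.
Set Implicit Arguments. Unset Strict Implicit. Unset Printing Implicit Defensive.

Section Aux.
Variable T : finType.

Lemma cross (r : rel T) (S : {set T}) x y :
  connect r x y -> x \in S -> y \notin S ->
  exists a a', [/\ a \in S, a' \notin S & r a a'].
Proof.
case/connectP => s; elim: s x => [|z s IH] x /=.
  by move=> _ -> ->.
move=> /andP [rxz pz] ly xS yS.
case: (boolP (z \in S)) => zS.
  exact: IH pz ly zS yS.
by exists x, z.
Qed.

Lemma connect_mono (r r' : rel T) (Z : {set T}) x y :
  (forall u v, u \in Z -> r u v -> (v \in Z) && r' u v) ->
  connect r x y -> x \in Z -> connect r' x y.
Proof.
move=> H; case/connectP => s; elim: s x => [|z s IH] x /=.
  by move=> _ -> _.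
move=> /andP [rxz pz] ly xZ.
have /andP [zZ r'xz] := H _ _ xZ rxz.
exact: connect_trans (connect1 r'xz) (IH _ pz ly zZ).
Qed.

Variable e : rel T.
Hypothesis esym : symmetric e.
Variable p : T -> T.
Variable b : T -> bool.
Hypothesis pproper : forall x y, e x y -> p x = p y -> b x != b y.
Definition rP := [rel u v | e u v && (p u == p v)].
Hypothesis pconn : forall x y, p x = p y -> connect rP x y.
Variable Z : {set T}.
Hypothesis Zunion : forall x y, p x = p y -> x \in Z -> y \in Z.
Definition restr := [rel u v | [&& u \in Z, v \in Z & e u v]].
Hypothesis Zconn : forall x y, x \in Z -> y \in Z -> connect restr x y.

Definition Inv (S : {set T}) (F : {set {set T}}) (c : T -> bool) :=
  [/\ S \subset Z,
      (forall f, f \in F -> [/\ #|f| = 2, f \subset S &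
          forall a a', a \in f -> a' \in f -> a != a' -> e a a' && (c a != c a')]),
      (forall x y, x \in S -> y \in S -> connect [rel u v | [set u; v] \in F] x y),
      #|F| = (#|S| - 1)%N &
      (forall x y, x \in S -> y \in S -> p x = p y -> (c x == c y) = (b x == b y))].

Lemma Frel_sym (F : {set {set T}}) : symmetric [rel u v | [set u; v] \in F].
Proof. by move=> u v /=; rewrite setUC. Qed.

Lemma add_inv S F c x y :
  Inv S F c -> x \in S -> y \in Z -> y \notin S -> e x y ->
  (p x = p y \/ forall z, z \in S -> p z != p y) ->
  Inv (y |: S) ([set x; y] |: F) (fun z => if z == y then ~~ c x else c z).
Proof.
move=> [SZ HF Hc HcF Hcons] xS yZ yS exy Hcase.
have xy : x != y by apply: contraNneq yS => <-.
have Fsub : forall u v, [set u; v] \in F -> [set u; v] \in [set x; y] |: F.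
  by move=> u v H; rewrite in_setU1 H orbT.
split.
- by apply/subsetP => z; rewrite in_setU1 => /predU1P [-> //|]; apply/subsetP.
- move=> f; rewrite in_setU1 => /predU1P [->|fF].
    split; first by rewrite cards2 xy.
      by apply/subsetP => z; rewrite !inE => /orP [/eqP ->|/eqP ->]; rewrite ?eqxx ?xS ?orbT.
    move=> a a'; rewrite !inE => /orP [] /eqP -> /orP [] /eqP ->; rewrite ?eqxx //.
      by rewrite exy (negbTE xy); case: (c x).
    by rewrite esym exy eq_sym (negbTE xy); case: (c x).
  have [f2 fS fe] := HF f fF.
  split => //; first by apply: (subset_trans fS); apply/subsetP => z zS; rewrite in_setU1 zS orbT.
  move=> a a' af a'f aa'.
  have aS : a \in S by apply: (subsetP fS).
  have a'S : a' \in S by apply: (subsetP fS).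
  rewrite (_ : (a == y) = false); last by apply: contraNF yS => /eqP <-.
  by rewrite (_ : (a' == y) = false); [apply: fe|apply: contraNF yS => /eqP <-].
- have Hs := sym_connect_sym (Frel_sym ([set x; y] |: F)).
  have old : forall u v, u \in S -> v \in S ->
      connect [rel u v | [set u; v] \in [set x; y] |: F] u v.
    move=> u v uS vS; apply: (connect_sub _ (Hc u v uS vS)) => u' v' /= H.
    by apply: connect1; rewrite /= in_setU1 H orbT.
  have yx : connect [rel u v | [set u; v] \in [set x; y] |: F] y x.
    by apply: connect1; rewrite /= in_setU1 setUC eqxx.
  move=> u v; rewrite !in_setU1 => /predU1P [->|uS] /predU1P [->|vS] //.
  + by apply: connect_trans yx (old _ _ xS vS).
  + by rewrite Hs; apply: connect_trans yx (old _ _ xS uS).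
  + exact: old.
- have yF : [set x; y] \notin F.
    apply/negP => /HF [_ fS _]; move/negP: yS; apply; apply: (subsetP fS).
    by rewrite !inE eqxx orbT.
  rewrite (cardsU1 [set x; y] F) (cardsU1 y S) yF yS HcF /= add1n subn1 /=.
  have : 0 < #|S| by apply/card_gt0P; exists x.
  by case: #|S|.
- move=> u v; rewrite !in_setU1 => /predU1P [->|uS] /predU1P [->|vS]; rewrite ?eqxx //.
  + rewrite (_ : (v == y) = false); last by apply: contraNF yS => /eqP <-.
    case: Hcase => [pxy|fresh] pyv.
      have := Hcons x v xS vS; rewrite pxy pyv => /(_ erefl).
      have := pproper exy pxy.
      by case: (b x); case: (b y); case: (c x); case: (c v); case: (b v).
    by have := fresh v vS; rewrite pyv eqxx.
  + rewrite (_ : (u == y) = false); last by apply: contraNF yS => /eqP <-.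
    case: Hcase => [pxy|fresh] puy.
      have := Hcons x u xS uS; rewrite pxy -puy => /(_ erefl).
      have := pproper exy pxy.
      by case: (b x); case: (b y); case: (c x); case: (c u); case: (b u).
    by have := fresh u uS; rewrite puy eqxx.
  + rewrite (_ : (u == y) = false); last by apply: contraNF yS => /eqP <-.
    rewrite (_ : (v == y) = false); last by apply: contraNF yS => /eqP <-.
    exact: Hcons.
Qed.


Lemma grow_n n : n < #|Z| -> exists (S : {set T}) (F : {set {set T}}) (c : T -> bool), #|S| = n.+1 /\ Inv S F c.
Proof.
elim: n => [|n IH] Hn.
  have [z0 z0Z] : exists z0, z0 \in Z by apply/card_gt0P.
  exists [set z0], set0, (fun _ => false); split; first by rewrite cards1.
  split.
  - by apply/subsetP => z; rewrite inE => /eqP ->.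
  - by move=> f; rewrite inE.
  - by move=> x y; rewrite !inE => /eqP -> /eqP ->.
  - by rewrite cards0 cards1.
  - by move=> x y; rewrite !inE => /eqP -> /eqP ->; rewrite !eqxx.
have [S [F [c [cardS HI]]]] := IH (ltnW Hn).
have HI' := HI; case: HI' => [SZ _ _ _ _].
have [y yZ yS] : exists2 y, y \in Z & y \notin S.
  apply/subsetPn; apply: contraTN Hn => /subset_leq_card.
  by rewrite cardS -ltnNge ltnS.
have [x0 x0S] : exists x0, x0 \in S by apply/card_gt0P; rewrite cardS.
have [a [a' [aS a'S /= /and3P [aZ a'Z eaa']]]] :=
  cross (Zconn (subsetP SZ _ x0S) yZ) x0S yS.
have final : forall x y, x \in S -> y \in Z -> y \notin S -> e x y ->
  (p x = p y \/ forall z, z \in S -> p z != p y) ->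
  exists (S : {set T}) (F : {set {set T}}) (c : T -> bool), #|S| = n.+2 /\ Inv S F c.
  move=> x y' xS y'Z y'S exy Hc.
  exists (y' |: S), ([set x; y'] |: F), (fun z => if z == y' then ~~ c x else c z).
  by split; [rewrite cardsU1 y'S cardS | exact: add_inv].
case: (classic (exists x y, [/\ x \in S, y \in Z, y \notin S, e x y & p x = p y])).
  by move=> [x [y' [xS y'Z y'S exy pxy]]]; apply: (final x y') => //; left.
move=> Hno; apply: (final a a') => //; right => z zS; apply/negP => /eqP pz.
have [u [u' [uS u'S /= /andP [euu' /eqP puu']]]] := cross (pconn pz) zS a'S.
apply: Hno; exists u, u'; split => //.
by apply: Zunion puu' _; apply: (subsetP SZ).
Qed.

Lemma grow : Z != set0 -> exists (F : {set {set T}}) (c : T -> bool), [/\ is_tree e Z F,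
  (forall f, f \in F -> [/\ #|f| = 2, f \subset Z &
          forall a a', a \in f -> a' \in f -> a != a' -> e a a' && (c a != c a')]) &
  (forall x y, x \in Z -> y \in Z -> p x = p y -> (c x == c y) = (b x == b y))].
Proof.
move=> Zn0.
have Hlt : #|Z|.-1 < #|Z| by rewrite prednK ?card_gt0 //.
have [S [F [c [cardS [SZ HF Hc HcF Hcons]]]]] := grow_n Hlt.
have SeqZ : S = Z.
  by apply/eqP; rewrite eqEcard SZ cardS prednK ?card_gt0 ?leqnn.
rewrite SeqZ in HF Hc HcF Hcons.
exists F, c; split => //.
split => //.
move=> f fF; have [/eqP f2 fS fe] := HF f fF.
have [u [v [uv fuv]]] := cards2P _ f2.
have uf : u \in f by rewrite fuv !inE eqxx.
have vf : v \in f by rewrite fuv !inE eqxx orbT.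
exists u, v; split => //; try exact: (subsetP fS).
by have /andP [] := fe _ _ uf vf uv.
Qed.

End Aux.

Section Part.
Variable T : finType.
Variable e : rel T.
Hypothesis esym : symmetric e.
Hypothesis eirr : irreflexive e.

Definition good (p : T -> T) (b : T -> bool) :=
  (forall x y, e x y -> p x = p y -> b x != b y) /\
  (forall x y, p x = p y -> connect (rP e p) x y).

Definition mixed (p : T -> T) (b : T -> bool) :=
  forall x y, e x y -> p x != p y ->
   (exists x1 y1, [/\ p x1 = p x, p y1 = p y, e x1 y1 & b x1 == b y1]) /\
   (exists x2 y2, [/\ p x2 = p x, p y2 = p y, e x2 y2 & b x2 != b y2]).

Lemma merge p b x0 y0 (f : bool) :
  good p b -> e x0 y0 -> p x0 != p y0 ->
  (forall x1 y1, p x1 = p x0 -> p y1 = p y0 -> e x1 y1 -> b x1 != b y1 (+) f) ->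
  good (fun z => if p z == p y0 then p x0 else p z)
       (fun z => if p z == p y0 then b z (+) f else b z) /\
  #|(fun z => if p z == p y0 then p x0 else p z) @: [set: T]| < #|p @: [set: T]|.
Proof.
move=> [Hpr Hco] e0 uv Hf.
set v := p y0 in uv Hf *; set u := p x0 in uv Hf *.
set p' := fun z => if p z == v then u else p z.
set b' := fun z => if p z == v then b z (+) f else b z.
have sub : forall x y, connect (rP e p) x y -> connect (rP e p') x y.
  move=> x y; apply: connect_sub => a a' /= /andP [eaa' /eqP paa'].
  by apply: connect1; rewrite /= eaa' /p' paa' eqxx.
have symP' : connect_sym (rP e p').
  by apply: sym_connect_sym => a a' /=; rewrite esym eq_sym.
split; first split.
- move=> x y exy; rewrite /p' /b'.
  case: ifP => /eqP px; case: ifP => /eqP py.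
  + by move=> _; have := Hpr _ _ exy (etrans px (Logic.eq_sym py)); case: (b x); case: (b y); case: (f).
  + move=> upy; have := Hf y x (Logic.eq_sym upy) px; rewrite esym => /(_ exy).
    by case: (b x); case: (b y); case: (f).
  + move=> pxu; have := Hf x y pxu py exy.
    by case: (b x); case: (b y); case: (f).
  + by move=> pxy; apply: Hpr.
- have cross_uv : forall x y, p x = u -> p y = v -> connect (rP e p') x y.
    move=> x y pxu pyv.
    apply: connect_trans (sub _ _ (Hco x x0 pxu)) _.
    apply: connect_trans (sub _ _ (Hco y0 y (Logic.eq_sym pyv))).
    apply: connect1; rewrite /= e0 /p'.
    by rewrite -/u -/v (negbTE uv) (eqxx v) /= eqxx.
  move=> x y; rewrite (_ : p' x = if p x == v then u else p x) // (_ : p' y = if p y == v then u else p y) //.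
  case: ifP => /eqP px; case: ifP => /eqP py.
  + by move=> _; apply: sub; apply: Hco; rewrite px py.
  + move=> upy; rewrite symP'; apply: cross_uv => //.
  + by move=> pxu; apply: cross_uv.
  + by move=> pxy; apply: sub; apply: Hco.
- apply: (@leq_ltn_trans #|(p @: [set: T]) :\ v|).
    apply: subset_leq_card; apply/subsetP => z /imsetP [w _ ->].
    rewrite !inE /p'; case: ifP => /eqP pw.
      by rewrite -/u uv /=; apply/imsetP; exists x0.
    by apply/andP; split; [apply/eqP|apply/imsetP; exists w].
  rewrite (cardsD1 v (p @: [set: T])) (_ : v \in _); last by apply/imsetP; exists y0.
  by rewrite add1n.
Qed.

Lemma not_mixed_shrink p b : good p b -> ~ mixed p b ->
  exists p' b', good p' b' /\ #|p' @: [set: T]| < #|p @: [set: T]|.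
Proof.
move=> Hg Hm.
have [x [y [exy pxy HAB]]] : exists x y, [/\ e x y, p x != p y &
   ~ ((exists x1 y1, [/\ p x1 = p x, p y1 = p y, e x1 y1 & b x1 == b y1]) /\
   (exists x2 y2, [/\ p x2 = p x, p y2 = p y, e x2 y2 & b x2 != b y2]))].
  apply: NNPP => H; apply: Hm => x y exy pxy.
  apply: NNPP => H2; apply: H; exists x, y; split => //.
case: (classic (exists x1 y1, [/\ p x1 = p x, p y1 = p y, e x1 y1 & b x1 == b y1])) => HA.
  have HB : ~ (exists x2 y2, [/\ p x2 = p x, p y2 = p y, e x2 y2 & b x2 != b y2]).
    by move=> HB; apply: HAB.
  have Hf : forall x1 y1, p x1 = p x -> p y1 = p y -> e x1 y1 -> b x1 != b y1 (+) true.
    move=> x1 y1 p1 p2 e12; apply: contra_notN HB => H.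
    exists x1, y1; split => //; move: H; by case: (b x1); case: (b y1).
  have [Hg' Hc] := @merge p b x y true Hg exy pxy Hf.
  by exists (fun z => if p z == p y then p x else p z),
    (fun z => if p z == p y then b z (+) true else b z).
have Hf : forall x1 y1, p x1 = p x -> p y1 = p y -> e x1 y1 -> b x1 != b y1 (+) false.
  move=> x1 y1 p1 p2 e12; apply: contra_notN HA => H.
  exists x1, y1; split => //; move: H; by case: (b x1); case: (b y1).
have [Hg' Hc] := @merge p b x y false Hg exy pxy Hf.
by exists (fun z => if p z == p y then p x else p z),
    (fun z => if p z == p y then b z (+) false else b z).
Qed.

Lemma good_mixed : exists p b, good p b /\ mixed p b.
Proof.
suff H : forall n p b, good p b -> #|p @: [set: T]| <= n -> exists p b, good p b /\ mixed p b.
  apply: (H _ (fun z => z) (fun _ => false)) (leqnn _).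
  split; first by move=> x y exy /= xy; move: exy; rewrite xy eirr.
  by move=> x y /= ->; apply: connect0.
elim=> [|n IH] p b Hg Hc; case: (classic (mixed p b)) => Hm; try by exists p, b.
  have [p' [b' [_ H]]] := not_mixed_shrink Hg Hm.
  by move: (leq_trans H Hc).
have [p' [b' [Hg' H]]] := not_mixed_shrink Hg Hm.
by apply: (IH p' b' Hg'); rewrite -ltnS; apply: leq_trans H Hc.
Qed.

End Part.

Section Lift.
Variable T : finType.
Variable e : rel T.
Hypothesis esym : symmetric e.
Variable p : T -> T.
Variable b : T -> bool.
Hypothesis pproper : forall x y, e x y -> p x = p y -> b x != b y.
Hypothesis pconn : forall x y, p x = p y -> connect (rP e p) x y.
Hypothesis pmix : mixed e p b.

Definition eQ := [rel u v | (u != v) && [exists x, exists y, [&& p x == u, p y == v & e x y]]].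

Lemma eQ_sym : symmetric eQ.
Proof.
move=> u v /=; rewrite eq_sym; congr (_ && _).
apply/existsP/existsP => [] [x /existsP [y /and3P [h1 h2 h3]]];
  exists y; apply/existsP; exists x; by rewrite h1 h2 esym h3.
Qed.

Lemma eQ_irr : irreflexive eQ.
Proof. by move=> u /=; rewrite eqxx. Qed.

Lemma partR (Z : {set T}) w z : (forall x y, p x = p y -> x \in Z -> y \in Z) ->
  p w = p z -> w \in Z -> connect (restr e Z) w z.
Proof.
move=> Zun pwz wZ; apply: (connect_mono (r := rP e p)) (pconn pwz) wZ.
move=> u v uZ /= /andP [euv /eqP puv].
have vZ := Zun _ _ puv uZ.
by rewrite vZ uZ euv.
Qed.


Lemma lift_minor (t : nat) : 2 <= t -> has_K_minor eQ t -> has_even_odd_K_minor e t.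
Proof.
move=> t2 [B [F [Htree Hdisj Hadj]]].
pose Z i := [set x | p x \in B i].
have Zun : forall i x y, p x = p y -> x \in Z i -> y \in Z i.
  by move=> i x y pxy; rewrite !inE pxy.
have other : forall i : 'I_t, exists j, i != j.
  move=> i; have t0 : 0 < t by apply: leq_trans t2.
  have t1 : 1 < t by [].
  case: (eqVneq (nat_of_ord i) 0) => Hi.
    by exists (Ordinal t1); apply/eqP => /(congr1 val) /=; rewrite Hi.
  by exists (Ordinal t0); apply/eqP => /(congr1 val) /=; apply/eqP.
have Zn0 : forall i, Z i != set0.
  move=> i; have [j ij] := other i.
  have [u [v [uB vB /andP [_ /existsP [x /existsP [y /and3P [/eqP pxu _ _]]]]]]] := Hadj i j ij.
  by apply/set0Pn; exists x; rewrite inE pxu.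
have Zconn : forall i x y, x \in Z i -> y \in Z i -> connect (restr e (Z i)) x y.
  move=> i x y; rewrite !inE => xB yB.
  have [_ Hedge Hcon _] := Htree i.
  pose Q a := a \in B i /\ forall z, p z = a -> connect (restr e (Z i)) x z.
  have Q0 : Q (p x).
    split => // z pz; apply: partR (Zun i) (Logic.eq_sym pz) _; by rewrite inE.
  have Qstep : forall a a', Q a -> [set a; a'] \in F i -> Q a'.
    move=> a a' [aB Ha] /Hedge [u [v [Huv uB vB /andP [uv /existsP [x0 /existsP [y0 /and3P [/eqP px0 /eqP py0 e0]]]]]]].
    have a'B : a' \in B i.
      have : a' \in [set u; v] by rewrite -Huv !inE eqxx orbT.
      by rewrite !inE => /orP [] /eqP ->.
    split => // z pz.
    case: (eqVneq a a') => [aa'|naa']; first by apply: Ha; rewrite pz aa'.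
    have x0Z : x0 \in Z i by rewrite inE px0.
    have y0Z : y0 \in Z i by rewrite inE py0.
    have : a \in [set u; v] by rewrite -Huv !inE eqxx.
    have : a' \in [set u; v] by rewrite -Huv !inE eqxx orbT.
    rewrite !inE => /orP [] /eqP a'E /orP [] /eqP aE.
    + by move: naa'; rewrite aE a'E eqxx.
    + have h1 := Ha y0 (etrans py0 (Logic.eq_sym aE)).
      have h2 : connect (restr e (Z i)) y0 x0 by apply: connect1; rewrite /= x0Z y0Z esym e0.
      have h3 : connect (restr e (Z i)) x0 z by apply: partR (Zun i) _ x0Z; rewrite pz a'E.
      exact: connect_trans (connect_trans h1 h2) h3.
    + have h1 := Ha x0 (etrans px0 (Logic.eq_sym aE)).
      have h2 : connect (restr e (Z i)) x0 y0 by apply: connect1; rewrite /= x0Z y0Z e0.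
      have h3 : connect (restr e (Z i)) y0 z by apply: partR (Zun i) _ y0Z; rewrite pz a'E.
      exact: connect_trans (connect_trans h1 h2) h3.
    + by move: naa'; rewrite aE a'E eqxx.
  have Qpath : forall s a, Q a -> path [rel u v | [set u; v] \in F i] a s -> Q (last a s).
    elim=> [|a' s IH] a Qa //= /andP [H1 H2].
    by apply: IH H2; apply: Qstep Qa H1.
  have := Hcon _ _ xB yB; case/connectP => s ps ys.
  by have [_ H] := Qpath s _ Q0 ps; apply: H; rewrite ys.
pose P i (Fc : {set {set T}} * (T -> bool)) := [/\ is_tree e (Z i) Fc.1,
  (forall f, f \in Fc.1 -> [/\ #|f| = 2, f \subset Z i &
          forall a a', a \in f -> a' \in f -> a != a' -> e a a' && (Fc.2 a != Fc.2 a')]) &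
  (forall x y, x \in Z i -> y \in Z i -> p x = p y -> (Fc.2 x == Fc.2 y) = (b x == b y))].
have HP : forall i, exists Fc, P i Fc.
  move=> i; have [F0 [c0 H]] := grow esym pproper pconn (Zun i) (Zconn i) (Zn0 i).
  by exists (F0, c0).
pose Fc i := proj1_sig (constructive_indefinite_description _ (HP i)).
have HFc : forall i, P i (Fc i).
  by move=> i; rewrite /Fc; case: constructive_indefinite_description.
have Zdisj : forall i j, i != j -> [disjoint Z i & Z j].
  move=> i j ij; rewrite disjoint_subset; apply/subsetP => x; rewrite !inE => xi.
  by rewrite (disjointFr (Hdisj i j ij) xi).
pose cg x := if [pick i | x \in Z i] is Some i then (Fc i).2 x else false.
have cgE : forall i x, x \in Z i -> cg x = (Fc i).2 x.
  move=> i x xi; rewrite /cg; case: pickP => [j xj|/(_ i)]; last by rewrite xi.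
  case: (eqVneq i j) => [-> //|ij].
  by move: (disjointFr (Zdisj i j ij) xi); rewrite xj.
exists cg, Z, (fun i => (Fc i).1); split.
- by move=> i; have [] := HFc i.
- move=> i x y xyF; have [_ H _] := HFc i.
  have [f2 fsub fe] := H _ xyF.
  have xZ : x \in Z i by apply: (subsetP fsub); rewrite !inE eqxx.
  have yZ : y \in Z i by apply: (subsetP fsub); rewrite !inE eqxx orbT.
  have xy : x != y.
    by apply/eqP => xy; move: f2; rewrite xy setUid cards1.
  rewrite (cgE i x xZ) (cgE i y yZ).
  have xf : x \in [set x; y] by rewrite !inE eqxx.
  have yf : y \in [set x; y] by rewrite !inE eqxx orbT.
  by have /andP [] := fe x y xf yf xy.
- exact: Zdisj.
- move=> i j ij.
  have [u [v [uB vB /andP [uv /existsP [x /existsP [y /and3P [/eqP pxu /eqP pyv exy]]]]]]] := Hadj i j ij.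
  have pxy : p x != p y by rewrite pxu pyv.
  have [[x1 [y1 [p1 q1 e1 b1]]] [x2 [y2 [p2 q2 e2 b2]]]] := pmix exy pxy.
  have x1Z : x1 \in Z i by rewrite inE p1 pxu.
  have x2Z : x2 \in Z i by rewrite inE p2 pxu.
  have y1Z : y1 \in Z j by rewrite inE q1 pyv.
  have y2Z : y2 \in Z j by rewrite inE q2 pyv.
  have [_ _ Ci] := HFc i; have [_ _ Cj] := HFc j.
  have cx := Ci x1 x2 x1Z x2Z (etrans p1 (Logic.eq_sym p2)).
  have cy := Cj y1 y2 y1Z y2Z (etrans q1 (Logic.eq_sym q2)).
  rewrite -(cgE i x1 x1Z) -(cgE i x2 x2Z) in cx.
  rewrite -(cgE j y1 y1Z) -(cgE j y2 y2Z) in cy.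
  case: (boolP (cg x1 == cg y1)) => H1.
    exists x1, y1; split => //.
  exists x2, y2; split => //.
  move: cx cy b1 b2 H1.
  by case: (cg x1); case: (cg y1); case: (cg x2); case: (cg y2); case: (b x1); case: (b y1); case: (b x2); case: (b y2).
- move=> i j ij.
  have [u [v [uB vB /andP [uv /existsP [x /existsP [y /and3P [/eqP pxu /eqP pyv exy]]]]]]] := Hadj i j ij.
  have pxy : p x != p y by rewrite pxu pyv.
  have [[x1 [y1 [p1 q1 e1 b1]]] [x2 [y2 [p2 q2 e2 b2]]]] := pmix exy pxy.
  have x1Z : x1 \in Z i by rewrite inE p1 pxu.
  have x2Z : x2 \in Z i by rewrite inE p2 pxu.
  have y1Z : y1 \in Z j by rewrite inE q1 pyv.
  have y2Z : y2 \in Z j by rewrite inE q2 pyv.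
  have [_ _ Ci] := HFc i; have [_ _ Cj] := HFc j.
  have cx := Ci x1 x2 x1Z x2Z (etrans p1 (Logic.eq_sym p2)).
  have cy := Cj y1 y2 y1Z y2Z (etrans q1 (Logic.eq_sym q2)).
  rewrite -(cgE i x1 x1Z) -(cgE i x2 x2Z) in cx.
  rewrite -(cgE j y1 y1Z) -(cgE j y2 y2Z) in cy.
  case: (boolP (cg x1 == cg y1)) => H1; last first.
    exists x1, y1; split => //.
  exists x2, y2; split => //.
  move: cx cy b1 b2 H1.
  by case: (cg x1); case: (cg y1); case: (cg x2); case: (cg y2); case: (b x1); case: (b y1); case: (b x2); case: (b y2).
Qed.

End Lift.

Theorem theorem3p7 (t : nat) : (2 <= t)%N ->
  (forall k, even_odd_minor_bound t k -> odd_minor_bound t k) /\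
  (forall k, minor_bound t k -> even_odd_minor_bound t (2 * k)).
Proof.
move=> t2; split.
  move=> k H T e sg Hno; apply: H sg _ => [[c [B [F [h1 h2 h3 h4 h5]]]]].
  by apply: Hno; exists c, B, F; split.
move=> k Hmb T e [eirr esym] Hno.
have [p [b [[Hpr Hco] Hmix]]] := good_mixed esym eirr.
have sQ : simple_graph (eQ e p) by split; [apply: eQ_irr | apply: eQ_sym].
have nQ : ~ has_K_minor (eQ e p) t.
  by move=> H; apply: Hno; apply: (lift_minor esym Hpr Hco Hmix t2 H).
have [phi Hphi] := Hmb T (eQ e p) sQ nQ.
have bound : forall x, (nat_of_bool (b x)) * k + phi (p x) < 2 * k.
  by move=> x; have := ltn_ord (phi (p x)); case: (b x) => /=; lia.
exists (fun x => Ordinal (bound x)) => x y exy.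
apply/negP => /eqP /(congr1 val) /= H.
case: (eqVneq (p x) (p y)) => pxy.
  have := Hpr _ _ exy pxy; have := ltn_ord (phi (p x)); have := ltn_ord (phi (p y)).
  by move: H; case: (b x); case: (b y) => //=; lia.
have eQxy : eQ e p (p x) (p y).
  by rewrite /= pxy; apply/existsP; exists x; apply/existsP; exists y; rewrite !eqxx exy.
have := Hphi _ _ eQxy; have := ltn_ord (phi (p x)); have := ltn_ord (phi (p y)).
move=> h1 h2 /eqP h3; apply: h3; apply: val_inj.
by move: H h1 h2; case: (b x); case: (b y) => /=; lia.
Qed.
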